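(* Consider the controlled SI optimal control problem described in the context, with one control per node ($M=N$) and given (fixed) initial conditions. Let $(\boldsymbol i^*(t), \boldsymbol\lambda^*(t), \boldsymbol u^*(t))$, $t\in[0,T]$, be an optimal state trajectory, its associated adjoint trajectory, and optimal controls satisfying the Pontryagin Maximum Principle conditions listed in the context. Then $\lambda_j^*(t)\geq 0$ for all $1\leq j\leq N$ and all $t\in[0,T]$.
   Context: Let $N\geq 1$, and let $\boldsymbol A=(A_{jk})$ be an $N\times N$ symmetric matrix with entries in $\{0,1\}$ (adjacency matrix of an undirected, unweighted network on nodes $1,\dots,N$). Fix $\beta>0$, a horizon $T>0$, and initial values $x_{0j}\in[0,1]$. Each node $j$ has its own control $u_j(t)$. The state $i_j(t)\in[0,1]$ (probability node $j$ is informed), with $s_j(t)=1-i_j(t)$, evolves by $\dot i_j(t)=\beta s_j(t)\sum_{k=1}^N A_{jk}i_k(t)+u_j(t)s_j(t)$, $i_j(0)=x_{0j}$, $1\le j\le N$. The objective to be maximized is $J=\frac1N\sum_{j=1}^N i_j(T)-\sum_{j=1}^N\int_0^T g_j(u_j(t))\,dt$, where each $g_j:\mathbb R\to\mathbb R$ is differentiable, strictly convex, even, increasing on $[0,\infty)$, and satisfies $g_j(0)=0$ (so $g_j\ge 0$). The optimal controls are nonnegative: $u_j^*(t)\ge 0$. The Hamiltonian is $H(\boldsymbol i,\boldsymbol\lambda,\boldsymbol u)=-\sum_{j=1}^N g_j(u_j)+\sum_{l=1}^N\lambda_l\big(\beta s_l\sum_{k=1}^N A_{lk}i_k+u_l s_l\big)$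 with $s_l=1-i_l$. The Pontryagin conditions are: $\boldsymbol i^*$ solves the state equations above; the adjoint variables satisfy $\dot\lambda_j^*(t)=-\beta\sum_{l=1}^N\lambda_l^*(t)s_l^*(t)A_{lj}+\beta\lambda_j^*(t)\sum_{k=1}^N A_{jk}i_k^*(t)+\lambda_j^*(t)u_j^*(t)$ with $\lambda_j^*(T)=1/N$; and for each $t$, $\boldsymbol u^*(t)$ maximizes $H(\boldsymbol i^*(t),\boldsymbol\lambda^*(t),\cdot)$ over control values. *)

(* Defs.v *)
From HB Require Import structures.
From mathcomp Require Import all_boot all_order all_algebra.
From mathcomp Require Import all_classical all_reals all_analysis.
Set Implicit Arguments. Unset Strict Implicit. Unset Printing Implicit Defensive.
Import Order.TTheory GRing.Theory Num.Theory.
Import numFieldNormedType.Exports.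
Local Open Scope classical_set_scope.
Local Open Scope ring_scope.

Section SIControl.
Variables (R : realType) (N : nat).

Definition adjacency (A : 'M[R]_N) : Prop :=
  (forall j k, A j k = 0 \/ A j k = 1) /\ (forall j k, A j k = A k j).

Definition cost_fun (g : R -> R) : Prop :=
  (forall x, derivable g x 1) /\
  (forall x y a, x != y -> 0 < a < 1 ->
     g (a * x + (1 - a) * y) < a * g x + (1 - a) * g y) /\
  (forall x, g (- x) = g x) /\
  (forall x y, 0 <= x -> x <= y -> g x <= g y) /\
  g 0 = 0.

Definition state_rhs (A : 'M[R]_N) (beta : R) (i : 'I_N -> R) (u : 'I_N -> R)
  (j : 'I_N) : R :=
  beta * (1 - i j) * (\sum_(k < N) A j k * i k) + u j * (1 - i j).

Definition adjoint_rhs (A : 'M[R]_N) (beta : R) (i lam u : 'I_N -> R)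
  (j : 'I_N) : R :=
  - beta * (\sum_(l < N) lam l * (1 - i l) * A l j)
  + beta * lam j * (\sum_(k < N) A j k * i k) + lam j * u j.

Definition hamiltonian (A : 'M[R]_N) (beta : R) (g : 'I_N -> R -> R)
  (i lam u : 'I_N -> R) : R :=
  - (\sum_(j < N) g j (u j))
  + \sum_(l < N) lam l * (beta * (1 - i l) * (\sum_(k < N) A l k * i k)
                          + u l * (1 - i l)).

Definition admissible (A : 'M[R]_N) (beta T : R) (x0 : 'I_N -> R)
  (u i : R -> 'I_N -> R) : Prop :=
  (forall j, measurable_fun `[0, T] (fun t => u t j)) /\
  (forall j, {within `[0, T], continuous (fun t => i t j)}) /\
  (forall j, i 0 j = x0 j) /\
  (forall j t, 0 < t < T ->
     is_derive t (1 : R) (fun s => i s j) (state_rhs A beta (i t) (u t) j)).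

Definition objective (g : 'I_N -> R -> R) (T : R) (u i : R -> 'I_N -> R)
  : \bar R :=
  ((N%:R)^-1 * \sum_(j < N) i T j)%:E
  - (\sum_(j < N) \int[@lebesgue_measure R]_(t in `[0%R, T]%classic) (g j (u t j))%:E)%E.

End SIControl.

(* Main.v *)
Require Import Defs.
From HB Require Import structures.
From mathcomp Require Import all_boot all_order all_algebra.
From mathcomp Require Import all_classical all_reals all_analysis.
Import Order.TTheory GRing.Theory Num.Theory.
Import numFieldNormedType.Exports.
Local Open Scope classical_set_scope.
From mathcomp Require Import ring lra.
Local Open Scope ring_scope.


Lemma g_ge0 (R : realType) (g : R -> R) x : cost_fun g -> 0 <= g x.
Proof.
move=> [_ [_ [gev [gmon g0]]]].
have [x0|x0] := leP 0 x; first by rewrite -g0 gmon.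
by rewrite -gev -g0 gmon // oppr_ge0 ltW.
Qed.

Lemma g_small (R : realType) (g : R -> R) c : cost_fun g -> 0 < c ->
  exists h, 0 < h /\ g h < c * h.
Proof.
move=> gc c0; have [gd [_ [gev [gmon g0]]]] := gc.
have D0 : is_derive (0:R) 1 g 0.
  apply: (@derive1_at_min _ g (-1) 1 0) => //.
  - by rewrite in_itv /= ltrN10 ltr01.
  - by move=> t _; rewrite g0 g_ge0.
case: D0 => dg dv.
have L := dg.
rewrite /derivable in L.
rewrite -/(derive g 0 1) dv in L.
move: L => /cvgr_lt /(_ c c0) H.
move: H; rewrite near_withinE => /nbhs_ballP [e /= e0 He].
have e20 : 0 < e / 2 by rewrite divr_gt0.
have := He (e / 2); rewrite /ball /= sub0r normrN gtr0_norm // ltr_pdivrMr // ltr_pMr // ltr1n.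
move=> /(_ isT); rewrite gt_eqF // => /(_ isT).
rewrite addr0 g0 subr0 /GRing.scale /= mulr1 => H.
exists (e / 2); split => //.
by rewrite -ltr_pdivrMr // mulrC.
Qed.

Lemma ham_diff (R : realType) (N : nat) (A : 'M[R]_N) beta (g : 'I_N -> R -> R)
  (i lam u : 'I_N -> R) l w :
  hamiltonian A beta g i lam (fun k => if k == l then w else u k)
  - hamiltonian A beta g i lam u
  = - (g l w - g l (u l)) + lam l * ((w - u l) * (1 - i l)).
Proof.
rewrite /hamiltonian.
set F := fun k => if k == l then w else u k.
have E1 : \sum_(j < N) g j (F j) - \sum_(j < N) g j (u j) = g l w - g l (u l).
  rewrite -sumrB (bigD1 l) //= big1 ?addr0; first by rewrite /F eqxx.
  by move=> k /negbTE kl; rewrite /F kl subrr.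
have E2 : \sum_(l0 < N) lam l0 * (beta * (1 - i l0) * (\sum_(k < N) A l0 k * i k) + F l0 * (1 - i l0))
  - \sum_(l0 < N) lam l0 * (beta * (1 - i l0) * (\sum_(k < N) A l0 k * i k) + u l0 * (1 - i l0))
  = lam l * ((w - u l) * (1 - i l)).
  rewrite -sumrB (bigD1 l) //= [X in _ + X]big1 ?addr0; first by rewrite /F eqxx; ring.
  by move=> k /negbTE kl; rewrite /F kl subrr.
rewrite -E1 -E2; ring.
Qed.

Lemma lam_s_ge0 (R : realType) (N : nat) (A : 'M[R]_N) beta (g : 'I_N -> R -> R)
  (i lam u : 'I_N -> R) l :
  cost_fun (g l) -> 0 <= u l ->
  (forall v, hamiltonian A beta g i lam v <= hamiltonian A beta g i lam u) ->
  0 <= lam l * (1 - i l).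
Proof.
move=> gc ul0 Hmax.
set c := lam l * (1 - i l).
have key w : - g l w + c * w <= - g l (u l) + c * u l.
  have := Hmax (fun k => if k == l then w else u k).
  rewrite -subr_le0 ham_diff => H; rewrite -subr_le0.
  suff -> : - g l w + c * w - (- g l (u l) + c * u l) =
    - (g l w - g l (u l)) + lam l * ((w - u l) * (1 - i l)) by [].
  rewrite /c; ring.
rewrite leNgt; apply/negP => c0.
have gc0 := gc; case: gc0 => _ [_ [gev [_ g0]]].
have u0 : u l = 0.
  have := key 0; rewrite g0 mulr0 oppr0 addr0 => H.
  have gu := @g_ge0 _ _ (u l) gc.
  apply/eqP; rewrite eq_le ul0 andbT.
  rewrite -(@ler_nM2l _ c) // mulr0; lra.
have [h [h0 hlt]] := @g_small _ _ (- c) gc (ltac:(by rewrite oppr_gt0)).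
have := key (- h); rewrite u0 g0 gev mulr0 oppr0 addr0.
lra.
Qed.

Lemma within_neg (R : realType) (f : R -> R) (a b x : R) :
  {within `[a, b], continuous f} -> a <= x <= b -> f x < 0 ->
  exists2 e, 0 < e & forall y, a <= y <= b -> `|y - x| < e -> f y < 0.
Proof.
move=> cf xab fx0.
have Ax : [set` `[a, b]] x by rewrite /= in_itv /=.
have := (proj1 (subspace_continuousP _ _) cf) x Ax.
move=> /cvgr_lt /(_ 0 fx0).
rewrite near_withinE => /nbhs_ballP [e /= e0 He].
exists e => // y yab yx; apply: (He y).
  by rewrite /ball /= distrC.
by rewrite /= in_itv /=.
Qed.

Lemma is_derive_expRM (R : realType) (K x : R) :
  is_derive x 1 (fun t => expR (K * t)) (K * expR (K * x)).
Proof.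
have D1 : is_derive x (1:R) (fun t : R => K * t) K.
  have H := @is_deriveZ _ R R id K x 1 1 (is_derive_id x 1).
  rewrite /GRing.scale /= mulr1 in H.
  exact: H.
have dc : derivable (fun t => expR (K * t)) x 1.
  apply/derivable1_diffP.
  apply: (@differentiable_comp _ _ _ _ (fun t : R => K * t) expR).
    by apply/derivable1_diffP; case: D1.
  exact/derivable1_diffP/derivable_expR.
apply: DeriveDef => //.
rewrite -derive1E.
have := @derive1_comp R (fun t : R => K * t) expR x.
rewrite /comp => ->.
- rewrite !derive1E.
  case: (is_derive_expR (K * x)) => _ ->.
  by case: D1 => _ ->; rewrite mulrC.
- by case: D1.
- exact: derivable_expR.
Qed.

Lemma cont_sum (R : realType) (T : topologicalType) n (h : 'I_n -> T -> R) x :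
  (forall k, {for x, continuous (h k)}) ->
  {for x, continuous (fun y => \sum_(k < n) h k y)}.
Proof.
elim: n h => [|n IH] h Hh.
  have -> : (fun y => \sum_(k < 0) h k y) = cst 0.
    by apply: funext => y; rewrite big_ord0.
  exact: cvg_cst.
have -> : (fun y => \sum_(k < n.+1) h k y) =
  (fun y => \sum_(k < n) h (widen_ord (leqnSn n) k) y) + h ord_max.
  by apply: funext => y; rewrite big_ord_recr.
apply: continuousD; last exact: Hh.
exact: (IH (fun k => h (widen_ord (leqnSn n) k))).
Qed.

Theorem lemma1 (R : realType) (N : nat) (A : 'M[R]_N) (beta T : R)
  (x0 : 'I_N -> R) (g : 'I_N -> R -> R)
  (istar lamstar ustar : R -> 'I_N -> R) :
  (0 < N)%N ->
  adjacency A -> 0 < beta -> 0 < T ->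
  (forall j, 0 <= x0 j <= 1) ->
  (forall j, cost_fun (g j)) ->
  (* (ustar, istar) is admissible and optimal *)
  admissible A beta T x0 ustar istar ->
  (forall u i, admissible A beta T x0 u i ->
     (objective g T u i <= objective g T ustar istar)%E) ->
  (* optimal controls are nonnegative *)
  (forall j t, 0 <= t <= T -> 0 <= ustar t j) ->
  (* adjoint equations and terminal condition *)
  (forall j, {within `[0, T], continuous (fun t => lamstar t j)}) ->
  (forall j t, 0 < t < T ->
     is_derive t (1 : R) (fun s => lamstar s j)
       (adjoint_rhs A beta (istar t) (lamstar t) (ustar t) j)) ->
  (forall j, lamstar T j = (N%:R)^-1) ->
  (* maximum condition *)
  (forall t, 0 <= t <= T -> forall v : 'I_N -> R,
     hamiltonian A beta g (istar t) (lamstar t) v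
       <= hamiltonian A beta g (istar t) (lamstar t) (ustar t)) ->
  forall j t, 0 <= t <= T -> 0 <= lamstar t j.
Proof.
Proof.
move=> N0 [A01 Asym] beta0 T0 x0b gc adm opt upos lamc lamd lamT Hmax j t tT.
have LS : forall l s, 0 <= s <= T -> 0 <= lamstar s l * (1 - istar s l).
  move=> l s hs.
  exact: (@lam_s_ge0 R N A beta g (istar s) (lamstar s) (ustar s) l (gc l)
            (upos l s hs) (Hmax s hs)).
case: adm => _ [icont _].
set F := fun s => beta * \sum_(k < N) A j k * istar s k.
have Fc : {within `[0, T], continuous F}.
  move=> x; apply: continuousM; first exact: cvg_cst.
  apply: cont_sum => k; apply: continuousM; first exact: cvg_cst.
  exact: icont.
have [c cI Fmin] := EVT_min (ltW T0) Fc.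
set K := - F c.
have FK : forall s, 0 <= s <= T -> 0 <= F s + K.
  move=> s hs; rewrite /K subr_ge0; apply: Fmin; by rewrite in_itv /=.
rewrite leNgt; apply/negP => lt0.
have tT1 := tT; case/andP: tT1 => t0 tT'.
set S := [set s | t <= s <= T /\ 0 <= lamstar s j].
have ST : S T.
  split; first by rewrite tT' lexx.
  by rewrite lamT invr_ge0 ler0n.
have Slb : has_lbound S by exists t => s [/andP[]].
have hS : has_inf S by split => //; exists T.
set t2 := inf S.
have tt2 : t <= t2 by apply: lb_le_inf; [exists T | move=> s [/andP[]]].
have t2T : t2 <= T by apply: ge_inf.
have t2I : 0 <= t2 <= T by apply/andP; split; lra.
have l2 : 0 <= lamstar t2 j.
  rewrite leNgt; apply/negP => l2n.
  have [e e0 He] := @within_neg R _ _ _ _ (lamc j) t2I l2n.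
  have [s Ss slt] := inf_adherent e0 hS.
  have t2s : t2 <= s := ge_inf Slb Ss.
  case: Ss => /andP[ts sT] ls.
  have : lamstar s j < 0.
    apply: He; first by apply/andP; split; lra.
    rewrite ger0_norm ?subr_ge0 //; lra.
  lra.
have neg : forall s, t <= s < t2 -> lamstar s j < 0.
  move=> s /andP[h1 h2]; rewrite ltNge; apply/negP => h.
  have : S s by split => //; apply/andP; split; lra.
  move/(ge_inf Slb) => ?; lra.
have tlt2 : t < t2.
  rewrite lt_neqAle tt2 andbT; apply/eqP => E; rewrite E in lt0; lra.
set hf := fun s => expR (K * s) * lamstar s j.
set df := fun s => K * expR (K * s) * lamstar s j +
  expR (K * s) * adjoint_rhs A beta (istar s) (lamstar s) (ustar s) j.
have Hd : forall x, x \in `]t, t2[ -> is_derive x 1 hf (df x).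
  move=> x; rewrite in_itv /= => /andP[h1 h2].
  have xT : 0 < x < T by apply/andP; split; lra.
  have := is_deriveM (@is_derive_expRM R K x) (lamd j x xT) => H.
  have -> : hf = (fun s => expR (K * s)) * (fun s => lamstar s j) by [].
  apply: (is_derive_eq H).
  rewrite /df /GRing.scale /=; ring.
have Hc0 : {within `[0, T], continuous hf}.
  have -> : hf = (fun s => expR (K * s)) \* (fun s => lamstar s j) by [].
  move=> x; apply: continuousM; last exact: lamc.
  apply: continuous_subspaceT => y.
  apply: differentiable_continuous; apply/derivable1_diffP.
  by case: (@is_derive_expRM R K y).
have Hc : {within `[t, t2], continuous hf}.
  apply: continuous_subspaceW Hc0 => y /=; rewrite !in_itv /= => /andP[? ?].
  by apply/andP; split; lra.
have [x xI Hx] := MVT tlt2 Hd Hc.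
move: xI; rewrite in_itv /= => /andP[h1 h2].
have xT : 0 <= x <= T by apply/andP; split; lra.
have lx := neg x (ltac:(apply/andP; split; lra)).
have ex0 : 0 < expR (K * x) by apply: expR_gt0.
have sum0 : 0 <= \sum_(l < N) lamstar x l * (1 - istar x l) * A l j.
  apply: sumr_ge0 => l _; apply: mulr_ge0; first exact: LS.
  by case: (A01 l j) => ->.
have ux := upos j x xT.
have Fx := FK x xT.
have dfx : df x <= 0.
  rewrite /df /adjoint_rhs -/(F x) ; set S0 := \sum_(l < N) _.
  rewrite -/S0 in sum0.
  have -> : K * expR (K * x) * lamstar x j + expR (K * x) *
    (- beta * S0 + beta * lamstar x j * (\sum_(k < N) A j k * istar x k) +
     lamstar x j * ustar x j) =
    expR (K * x) * (- (beta * S0) + lamstar x j * (F x + K) + lamstar x j * ustar x j).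
    by rewrite /F; ring.
  apply: mulr_ge0_le0; first exact: ltW.
  have : 0 <= beta * S0 by apply: mulr_ge0 => //; exact: ltW.
  have : lamstar x j * (F x + K) <= 0 by apply: mulr_le0_ge0 => //; exact: ltW.
  have : lamstar x j * ustar x j <= 0 by apply: mulr_le0_ge0 => //; exact: ltW.
  lra.
have : hf t2 - hf t <= 0.
  rewrite Hx; apply: mulr_le0_ge0 => //; lra.
rewrite /hf.
have : 0 <= expR (K * t2) * lamstar t2 j by apply: mulr_ge0 => //; exact: ltW (expR_gt0 _).
have : expR (K * t) * lamstar t j < 0 by rewrite pmulr_rlt0 // expR_gt0.
lra.
Qed.
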